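(* Let $n\ge3$, $k\ge1$ be integers, $\alpha=n/2-1$, let $b>0>c$ satisfy $$bc=-\frac{(k+1)k(\alpha+k-1)}{(2\alpha+k)(2\alpha+k-1)(\alpha+k+1)},\qquad b+c=-\frac{2\alpha(k+1)^2(\alpha+k-1)}{(2\alpha+k)(2\alpha+k-1)(\alpha+2k+1)},$$ and let $\beta_1<\dots<\beta_{k+1}$ be the zeros of $P_{k+1}^{(n)}(t)+bP_{k-1}^{(n)}(t)$. Then the polynomial $g_k(t)=(t-\beta_1)(t-\beta_2)\cdots(t-\beta_k)$ has all Gegenbauer coefficients positive, i.e. $g_k=\sum_{i=0}^kc_iP_i^{(n)}$ with $c_i>0$ for $i=0,\dots,k$.
   Context: $P_i^{(n)}$ is the Gegenbauer polynomial of degree $i$ (Jacobi polynomial with parameters $(n-3)/2,(n-3)/2$, normalized $P_i^{(n)}(1)=1$). *)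

(* Defs.v *)
From HB Require Import structures.
From mathcomp Require Import all_boot all_order all_algebra.
Set Implicit Arguments. Unset Strict Implicit. Unset Printing Implicit Defensive.
Import Order.TTheory GRing.Theory Num.Theory.
Local Open Scope ring_scope.

(* Normalized Gegenbauer polynomials P_i^(n) (P_i(1) = 1), i.e. Jacobi
   polynomials with parameters ((n-3)/2,(n-3)/2) normalized at 1, defined by
   the standard three-term recurrence
     P_0 = 1, P_1 = t,
     (m+n-2) P_{m+1} = (2m+n-2) t P_m - m P_{m-1}.
   gegen_pair n i = (P_i, P_{i+1}). *)
Fixpoint gegen_pair (R : fieldType) (n i : nat) : {poly R} * {poly R} :=
  match i with
  | 0 => (1, 'X)
  | i'.+1 =>
      let: (p, q) := gegen_pair R n i' in
      let m := i'.+1 in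
      (q, ((m + n - 2)%N%:R)^-1 *:
            ((2 * m + n - 2)%N%:R *: ('X * q) - m%:R *: p))
  end.

Definition gegen (R : fieldType) (n i : nat) : {poly R} := (gegen_pair R n i).1.

(* Main.v *)
Require Import Defs.
From HB Require Import structures.
From mathcomp Require Import all_boot all_order all_algebra.
From mathcomp Require Import ring lra zify.
From mathcomp Require Import polyrcf.
Set Implicit Arguments. Unset Strict Implicit. Unset Printing Implicit Defensive.
Import Order.TTheory GRing.Theory Num.Theory.
Local Open Scope ring_scope.

Lemma gegen_pairE (R : fieldType) n i :
  gegen_pair R n i = (gegen R n i, gegen R n i.+1).
Proof.
elim: i => [|i IH] //.
rewrite /gegen /= IH /=.
by [].
Qed.

Lemma gegenSS (R : fieldType) n m : gegen R n m.+2 =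
  ((m.+1 + n - 2)%N%:R)^-1 *: ((2 * m.+1 + n - 2)%N%:R *: ('X * gegen R n m.+1)
     - m.+1%:R *: gegen R n m).
Proof.
by rewrite {1}/gegen /= gegen_pairE /=.
Qed.

Lemma gegen0 (R : fieldType) n : gegen R n 0 = 1. Proof. by []. Qed.
Lemma gegen1 (R : fieldType) n : gegen R n 1 = 'X. Proof. by []. Qed.

Definition Aco (R : fieldType) (n m : nat) : R :=
  (m + n - 2)%N%:R / (2 * m + n - 2)%N%:R.
Definition Cco (R : fieldType) (n m : nat) : R :=
  m%:R / (2 * m + n - 2)%N%:R.
Fixpoint hco (R : fieldType) (n m : nat) : R :=
  match m with 0 => 1 | m'.+1 => hco R n m' * Aco R n m' / Cco R n m'.+1 end.

Section Basic.
Variable R : rcfType.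
Implicit Types n m : nat.

Lemma natpos n m : (0 < m)%N -> 0 < (m%:R : R).
Proof. by rewrite ltr0n. Qed.

Lemma Aco_gt0 n m : (3 <= n)%N -> 0 < Aco R n m.
Proof. move=> h; rewrite /Aco divr_gt0 // ltr0n; lia. Qed.

Lemma Cco_gt0 n m : (3 <= n)%N -> 0 < Cco R n m.+1.
Proof. move=> h; rewrite /Cco divr_gt0 // ltr0n; lia. Qed.

Lemma hco_gt0 n m : (3 <= n)%N -> 0 < hco R n m.
Proof.
move=> h; elim: m => [|m IH] //=.
apply: divr_gt0; last exact: Cco_gt0.
by apply: mulr_gt0 => //; exact: Aco_gt0.
Qed.

Lemma Aco0 n : (3 <= n)%N -> Aco R n 0 = 1.
Proof. move=> h; rewrite /Aco mul2n double0 add0n divff // pnatr_eq0; lia. Qed.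

Lemma gegen_rec n m : (3 <= n)%N ->
  Aco R n m.+1 *: gegen R n m.+2 = 'X * gegen R n m.+1 - Cco R n m.+1 *: gegen R n m.
Proof.
move=> h; rewrite gegenSS /Aco /Cco scalerA mulrAC mulfV; last by rewrite pnatr_eq0; lia.
rewrite mul1r scalerBr scalerA mulVf; last by rewrite pnatr_eq0; lia.
by rewrite scale1r scalerA [_^-1 * _]mulrC.
Qed.

End Basic.

Section Size.
Variable R : rcfType.

Lemma gegen_size_lead n i : (3 <= n)%N ->
  (size (gegen R n i) = i.+1 /\ 0 < lead_coef (gegen R n i)) /\
  (size (gegen R n i.+1) = i.+2 /\ 0 < lead_coef (gegen R n i.+1)).
Proof.
move=> hn; elim: i => [|i [[s0 l0] [s1 l1]]].
  by rewrite gegen0 gegen1 size_polyX lead_coefX size_poly1 lead_coef1 ltr01.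
split=> //.
have P1nz : gegen R n i.+1 != 0 by rewrite -size_poly_gt0 s1.
have c1nz : ((2 * i.+1 + n - 2)%N%:R : R) != 0 by rewrite pnatr_eq0; lia.
have anz : ((i.+1 + n - 2)%N%:R : R)^-1 != 0 by rewrite invr_eq0 pnatr_eq0; lia.
have sX : size ((2 * i.+1 + n - 2)%N%:R *: ('X * gegen R n i.+1)) = i.+3.
  by rewrite size_scale // mulrC size_mulX // s1.
have sB : (size (- (i.+1%:R *: gegen R n i)) < i.+3)%N.
  by rewrite size_opp (leq_ltn_trans (size_scale_leq _ _)) // s0.
rewrite gegenSS size_scale // lead_coefZ.
rewrite size_addl ?sX // lead_coefDl ?sX // lead_coefZ (mulrC 'X) lead_coefMX.
split=> //.
apply: mulr_gt0; first by rewrite invr_gt0 ltr0n; lia.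
by apply: mulr_gt0 => //; rewrite ltr0n; lia.
Qed.

Lemma gegen_size n i : (3 <= n)%N -> size (gegen R n i) = i.+1.
Proof. by move=> h; case: (@gegen_size_lead n i h) => [[]]. Qed.
Lemma gegen_lead n i : (3 <= n)%N -> 0 < lead_coef (gegen R n i).
Proof. by move=> h; case: (@gegen_size_lead n i h) => [[]]. Qed.
End Size.

Lemma lincomb (T : comRingType) (a h1 h0 A0 c X s Q0 Q1 Q2 q0 q1 q2 S : T) :
  a * Q2 = X * Q1 - c * Q0 -> a * q2 = s * q1 - c * q0 -> h1 * c = h0 * A0 ->
  (A0 * h0) * (Q1 * q0 - Q0 * q1) = (X - s) * S ->
  (a * h1) * (Q2 * q1 - Q1 * q2) = (X - s) * (S + h1 * q1 * Q1).
Proof.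
move=> e1 e2 e3 e4.
transitivity (h1 * q1 * (a * Q2) - h1 * Q1 * (a * q2)); first ring.
rewrite e1 e2.
transitivity ((h1 * c) * (Q1 * q0 - Q0 * q1) + (X - s) * (h1 * q1 * Q1)); first ring.
rewrite e3 [h0 * A0]mulrC e4; ring.
Qed.

Lemma lincomb_top (T : comRingType) (b r Ah1 Ah0 h1 X s Q0 Q1 Q2 q0 q1 q2 S0 : T) :
  Ah1 = r * Ah0 ->
  Ah1 * (Q2 * q1 - Q1 * q2) = (X - s) * (S0 + h1 * q1 * Q1) ->
  Ah0 * (Q1 * q0 - Q0 * q1) = (X - s) * S0 ->
  Ah1 * ((Q2 + b * Q0) * q1 - Q1 * (q2 + b * q0)) =
    (X - s) * ((1 - b * r) * S0 + h1 * q1 * Q1).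
Proof.
move=> e0 e1 e2.
transitivity (Ah1 * (Q2 * q1 - Q1 * q2) - b * r * (Ah0 * (Q1 * q0 - Q0 * q1))).
  rewrite e0; ring.
rewrite e1 e2; ring.
Qed.

Definition Ssum (R : rcfType) n j (s : R) : {poly R} :=
  \sum_(i < j.+1) (hco R n i * (gegen R n i).[s]) *: gegen R n i.

Section CD.
Variable R : rcfType.

Lemma cd_level n j (s : R) : (3 <= n)%N ->
  (Aco R n j * hco R n j) *: (gegen R n j.+1 * ((gegen R n j).[s])%:P
      - gegen R n j * ((gegen R n j.+1).[s])%:P) = ('X - s%:P) * Ssum n j s.
Proof.
move=> hn; elim: j => [|j IH].
  rewrite /Ssum big_ord1 Aco0 // /= gegen0 gegen1 !hornerE.
  by rewrite !scale1r mulr1.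

rewrite /Ssum big_ord_recr /= -/(Ssum n j s).
rewrite -!mul_polyC (polyCM (Aco R n j.+1)) (polyCM (hco R n j.+1)).
apply: (lincomb (c := (Cco R n j.+1)%:P) (Q0 := gegen R n j)
   (q0 := ((gegen R n j).[s])%:P) (A0 := (Aco R n j)%:P) (h0 := (hco R n j)%:P)).
- by rewrite !mul_polyC gegen_rec.
- have := congr1 (horner^~ s) (gegen_rec R j hn).
  rewrite /= !hornerE => e.
  by rewrite -polyCM e polyCB !polyCM.
- rewrite -!polyCM divfK //; apply: lt0r_neq0; exact: Cco_gt0.
- by rewrite -polyCM mul_polyC IH.
Qed.
End CD.

Definition wco (R : rcfType) (b : R) n k i : R :=
  if (i < k)%N then (1 - b * (Aco R n k / Cco R n k)) * hco R n i else hco R n i.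

Definition Ttop (R : rcfType) (b : R) n k (s : R) : {poly R} :=
  \sum_(i < k.+1) (wco b n k i * (gegen R n i).[s]) *: gegen R n i.

Section CDtop.
Variable R : rcfType.

Lemma Ttop_split (b : R) n k' s : Ttop b n k'.+1 s =
  (1 - b * (Aco R n k'.+1 / Cco R n k'.+1)) *: Ssum n k' s
    + (hco R n k'.+1 * (gegen R n k'.+1).[s]) *: gegen R n k'.+1.
Proof.
rewrite /Ttop big_ord_recr /= /wco ltnn; congr (_ + _).
rewrite /Ssum scaler_sumr; apply: eq_bigr => i _.
by rewrite ltn_ord scalerA !mulrA.
Qed.

Lemma hcoS n m : hco R n m.+1 = hco R n m * Aco R n m / Cco R n m.+1.
Proof. by []. Qed.

Lemma cd_top n k' (b s : R) : (3 <= n)%N ->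
  let f := gegen R n k'.+2 + b *: gegen R n k' in
  (Aco R n k'.+1 * hco R n k'.+1) *: (f * ((gegen R n k'.+1).[s])%:P
      - gegen R n k'.+1 * (f.[s])%:P) = ('X - s%:P) * Ttop b n k'.+1 s.
Proof.
move=> hn f.
have e1 := cd_level k'.+1 s hn.
have e2 := cd_level k' s hn.
rewrite Ttop_split /f hornerD hornerZ.
rewrite /Ssum big_ord_recr -/(Ssum n k' s) in e1.
move: e1 e2; rewrite -!mul_polyC !polyCD.
rewrite (polyCM b) (polyCM (hco R n k'.+1)) polyCN (polyCM b) => e1 e2.
apply: (@lincomb_top _ b%:P (Aco R n k'.+1 / Cco R n k'.+1)%:P _ (Aco R n k' * hco R n k')%:P) => //.
rewrite -polyCM hcoS; congr (_%:P); ring.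
Qed.
End CDtop.

Lemma cd_deriv (R : rcfType) (c s : R) (p q T : {poly R}) :
  c *: (q * (p.[s])%:P - p * (q.[s])%:P) = ('X - s%:P) * T ->
  c * (q^`().[s] * p.[s] - p^`().[s] * q.[s]) = T.[s].
Proof.
move=> /(congr1 (fun r => (deriv r).[s])).
rewrite derivZ derivB !derivM !derivC derivXsubC !hornerE /=.
rewrite subrr !mul0r !addr0 => ->; ring.
Qed.

Section Sign.
Variable R : rcfType.

Lemma pos_right (p : {poly R}) y : 0 < lead_coef p ->
  (forall z, y < z -> ~~ root p z) -> forall z, y < z -> 0 < p.[z].
Proof.
move=> lc nr z yz.
have [M HM] := poly_pinfty_gt_lc lc.
have pM : 0 < p.[Num.max M z] by apply: (lt_le_trans lc); apply: HM; rewrite le_max lexx.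
rewrite ltNge; apply/negP => pz.
have zM : z <= Num.max M z by rewrite le_max lexx orbT.
have := @poly_ivt R p z (Num.max M z) zM.
case.
  by rewrite pz ltW.
move=> x /andP[zx _] rx.
by move: (nr x (lt_le_trans yz zx)); rewrite rx.
Qed.

Lemma sign_lemma (p q : {poly R}) (be : R) : 0 < lead_coef p ->
  (forall x, be <= x -> 0 <= q.[x]) ->
  (forall x, 0 < q^`().[x] * p.[x] - p^`().[x] * q.[x]) ->
  forall x, be <= x -> 0 < p.[x].
Proof.
move=> lc qpos cd.
have pnz : p != 0 by apply: contraTneq lc => ->; rewrite lead_coef0 ltxx.
have [y [nr hy]] : exists y, (forall z, y < z -> ~~ root p z) /\ (y < be \/ root p y).
  pose M := Num.max be (cauchy_bound p) + 1.
  have [hm1 hm2] : be <= Num.max be (cauchy_bound p) /\ cauchy_bound p <= Num.max be (cauchy_bound p).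
    by rewrite !le_max !lexx ?orbT.
  have cbM : cauchy_bound p <= M by rewrite /M; lra.
  have beM : be - 1 < M by rewrite /M; lra.
  case: (prev_rootP p (be - 1) M).
  - by move=> p0; rewrite p0 eqxx in pnz.
  - move=> y _ py0 hy hnr; exists y; split; last by right; apply/rootP.
    move=> z yz; have [zM|Mz] := ltP z M.
      by apply: hnr; rewrite in_itv /= yz zM.
    by apply: (ge_cauchy_bound pnz); rewrite in_itv /= andbT (le_trans cbM Mz).
  - move=> c _ _ hnr; exists (be - 1); split; last by left; rewrite ltrBlDr ltrDl ltr01.
    move=> z yz; have [zM|Mz] := ltP z M.
      by apply: hnr; rewrite in_itv /= yz zM.
    by apply: (ge_cauchy_bound pnz); rewrite in_itv /= andbT (le_trans cbM Mz).
have [ylt|yge] := ltP y be.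
  by move=> x bx; apply: (pos_right lc nr); apply: lt_le_trans bx.
case: hy => [|ry]; first by rewrite ltNge yge.
exfalso.
have py : p.[y] = 0 by apply/rootP.
have dneg : p^`().[y] < 0.
  have := cd y; rewrite py mulr0 add0r oppr_gt0 => h.
  rewrite ltNge; apply/negP => hd.
  by have := mulr_ge0 hd (qpos y yge); rewrite leNgt h.
have [u pu] := factor_theorem p y ry.
have uy : u.[y] < 0.
  by move: dneg; rewrite pu derivM derivXsubC !hornerE subrr mulr0 add0r.
have lu : 0 < lead_coef u by move: lc; rewrite pu lead_coefM lead_coefXsubC mulr1.
have nru : forall z, y < z -> ~~ root u z.
  move=> z yz; apply: contra (nr z yz); rewrite pu => /rootP uz.
  by apply/rootP; rewrite hornerM uz mul0r.
have u1 : 0 < u.[y + 1] by apply: (pos_right lu nru); rewrite ltrDl ltr01.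
have y1 : y <= y + 1 by lra.
have uu : u.[y] * u.[y + 1] < 0 by rewrite pmulr_llt0.
have [w hw rw] := @poly_ivtoo R u y (y + 1) y1 uu.
by move: hw; rewrite in_itv /= => /andP[yw _]; move: (nru w yw); rewrite rw.
Qed.
End Sign.

Lemma b_bound_aux (R : rcfType) (a K b c : R) : 1/2 <= a -> 1 <= K -> 0 < b -> c < 0 ->
  b * c = - ((K + 1) * K * (a + K - 1)) / ((2 * a + K) * (2 * a + K - 1) * (a + K + 1)) ->
  b + c = - (2 * a * (K + 1) ^+ 2 * (a + K - 1)) / ((2 * a + K) * (2 * a + K - 1) * (a + 2 * K + 1)) ->
  b * (K + 2 * a) < K.
Proof.
move=> ha hK hb hc hbc hbpc.
set u := K + 2 * a.
have hu : 2 <= u by rewrite /u; lra.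
pose D := (u - 1) * (a + 2 * K + 1) * (a + K + 1).
have hD : 0 < D by rewrite /D !mulr_gt0 //; lra.
pose Br := (1 - a) * (a + 2 * K + 1) + (K + 1) ^+ 2 * (a + K - 1) * (a + K + 1).
have E_eq : (K - b * u) * (K - c * u) * D = 2 * a * K * Br.
  transitivity (K ^+ 2 * D - (b + c) * K * u * D + (b * c) * u ^+ 2 * D); first ring.
  rewrite hbpc hbc /D /Br /u.
  field.
  by apply/and4P; split; apply: lt0r_neq0; lra.
have hBr : 0 < Br.
  have X1 : a + 2 * K + 1 <= (K + 1) * (a + K + 1) by nra.
  have X2 : a <= (K + 1) * (a + K - 1) by nra.
  have X3 : a * (a + 2 * K + 1) <= ((K + 1) * (a + K - 1)) * ((K + 1) * (a + K + 1)).
    by apply: ler_pM; lra.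
  rewrite /Br; nra.
have hpos : 0 < (K - b * u) * (K - c * u).
  have : 0 < (K - b * u) * (K - c * u) * D by rewrite E_eq !mulr_gt0 //; lra.
  by rewrite pmulr_lgt0.
have hc2 : 0 < K - c * u by nra.
move: hpos; rewrite pmulr_lgt0 // subr_gt0 //.
Qed.

Section Pos.
Variable R : rcfType.

Lemma wsum_pos (wt : nat -> R) n j x : 0 < wt 0%N -> (forall i, 0 <= wt i) ->
  0 < (\sum_(i < j.+1) (wt i * (gegen R n i).[x]) *: gegen R n i).[x].
Proof.
move=> h0 hw; rewrite horner_sum big_ord_recl /= gegen0 !hornerE.
apply: ltr_wpDr => //; apply: sumr_ge0 => i _.
by rewrite hornerZ -mulrA mulr_ge0 // -expr2 sqr_ge0.
Qed.

Lemma Ssum_pos n j (x : R) : (3 <= n)%N -> 0 < (Ssum n j x).[x].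
Proof.
move=> hn; apply: wsum_pos => [|i]; first exact: ltr01.
exact/ltW/hco_gt0.
Qed.

Lemma Ttop_pos (b : R) n k' x : (3 <= n)%N ->
  0 < 1 - b * (Aco R n k'.+1 / Cco R n k'.+1) -> 0 < (Ttop b n k'.+1 x).[x].
Proof.
move=> hn ht; apply: wsum_pos => [|i]; rewrite /wco.
  by rewrite ltn0Sn mulr1.
by case: ifP => _; rewrite ?mulr_ge0 ?ltW ?hco_gt0.
Qed.
End Pos.

Lemma scal_rearr (R : rcfType) (C lc q : R) (g X : {poly R}) :
  C *: (lc *: (g * X) * q%:P) = X * ((C * lc * q) *: g).
Proof. rewrite -!mul_polyC !polyCM; ring. Qed.


Unset Implicit Arguments.

Theorem lemma4p13 (R : rcfType) (n k : nat) (b c : R)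
  (beta : 'I_k.+1 -> R) :
  (3 <= n)%N -> (1 <= k)%N ->
  let alpha : R := n%:R / 2 - 1 in
  let kr : R := k%:R in
  0 < b -> c < 0 ->
  b * c = - ((kr + 1) * kr * (alpha + kr - 1)) /
            ((2 * alpha + kr) * (2 * alpha + kr - 1) * (alpha + kr + 1)) ->
  b + c = - (2 * alpha * (kr + 1) ^+ 2 * (alpha + kr - 1)) /
            ((2 * alpha + kr) * (2 * alpha + kr - 1) * (alpha + 2 * kr + 1)) ->
  (forall i j : 'I_k.+1, (i < j)%N -> beta i < beta j) ->
  (forall i : 'I_k.+1, root (gegen R n k.+1 + b *: gegen R n k.-1) (beta i)) ->
  exists d : 'I_k.+1 -> R,
    (forall i, 0 < d i) /\
    \prod_(i < k) ('X - (beta (inord i))%:P) =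
      \sum_(i < k.+1) d i *: gegen R n i.
Proof.
move=> hn; case: k beta => [|k'] beta // _ alpha kr hb hc hbc hbpc hmono hroot.
rewrite /= in hroot.
set f := gegen R n k'.+2 + b *: gegen R n k' in hroot.
set th := 1 - b * (Aco R n k'.+1 / Cco R n k'.+1).
have hth : 0 < th.
  have ha : 1/2 <= alpha.
    have : (3 : R) <= n%:R by rewrite ler_nat.
    rewrite /alpha; lra.
  have hK : 1 <= kr by rewrite /kr ler1n.
  have hbu := b_bound_aux ha hK hb hc hbc hbpc.
  have eAC : Aco R n k'.+1 / Cco R n k'.+1 = (kr + 2 * alpha) / kr.
    rewrite /Aco /Cco /alpha /kr natrB; last lia.
    rewrite natrD; field.
    apply/andP; split; last by rewrite pnatr_eq0; lia.
    by apply: lt0r_neq0; have := ler0n R k'; lra.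
  rewrite /th eAC mulrA subr_gt0 ltr_pdivrMr ?mul1r //; lra.
pose be := beta ord_max.
have hle : forall i, beta i <= be.
  move=> i; have [e|lt] := eqVneq i ord_max; first by rewrite e.
  apply/ltW/hmono; have := ltn_ord i; rewrite /= ltnS leq_eqVlt => /orP[/eqP e2|//].
  by move: lt; rewrite (_ : i = ord_max) ?eqxx //; apply: val_inj.
have sf : size f = k'.+3.
  rewrite /f size_addl gegen_size //.
  by rewrite (leq_ltn_trans (size_scale_leq _ _)) // gegen_size.
have lf : lead_coef f = lead_coef (gegen R n k'.+2).
  rewrite /f lead_coefDl //.
  by rewrite gegen_size // (leq_ltn_trans (size_scale_leq _ _)) // gegen_size.
have lfpos : 0 < lead_coef f by rewrite lf gegen_lead.
have binj : injective beta.
  move=> i j eij; apply/eqP; apply: contraT => nij.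
  have [lt|gt] : (i < j)%N \/ (j < i)%N.
    by move: nij; rewrite neq_ltn => /orP[] ?; [left|right].
    by move: (hmono _ _ lt); rewrite eij ltxx.
  by move: (hmono _ _ gt); rewrite eij ltxx.
have ffac : f = lead_coef f *: \prod_(i < k'.+2) ('X - (beta i)%:P).
  have := @all_roots_prod_XsubC _ f [seq beta i | i <- enum 'I_k'.+2].
  rewrite size_map size_enum_ord big_map big_enum /= => H; apply: H.
  - exact: sf.
  - by apply/allP => z /mapP [i _ ->]; exact: hroot.
  - by rewrite uniq_rootsE map_inj_uniq ?enum_uniq.
have fnn : forall x, be <= x -> 0 <= f.[x].
  move=> x hx; rewrite ffac hornerZ horner_prod; apply: mulr_ge0; first exact: ltW.
  apply: prodr_ge0 => i _; rewrite hornerXsubC subr_ge0.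
  exact: le_trans (hle i) hx.
have cpos : forall j, 0 < Aco R n j * hco R n j.
  by move=> j; rewrite mulr_gt0 ?Aco_gt0 ?hco_gt0.
have Hpos : forall m, (m <= k'.+1)%N -> forall x, be <= x ->
    0 < (gegen R n (k'.+1 - m)).[x].
  elim => [|m IH] hm.
    rewrite subn0; apply: (@sign_lemma R (gegen R n k'.+1) f be).
    - exact: gegen_lead.
    - exact: fnn.
    - move=> y; have := @cd_top R n k' b y hn; move=> /= /cd_deriv h.
      have := @Ttop_pos R b n k' y hn hth; rewrite -h.
      by rewrite (pmulr_rgt0 _ (cpos k'.+1)).
  have e : (k'.+1 - m = (k'.+1 - m.+1).+1)%N by lia.
  apply: (@sign_lemma R _ (gegen R n (k'.+1 - m.+1).+1) be).
  - exact: gegen_lead.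
  - by move=> x hx; rewrite -e; apply/ltW/IH => //; lia.
  - move=> y; have /cd_deriv h := @cd_level R n (k'.+1 - m.+1) y hn.
    by have := @Ssum_pos R n (k'.+1 - m.+1) y hn; rewrite -h (pmulr_rgt0 _ (cpos _)).
have qpos : forall i : 'I_k'.+2, 0 < (gegen R n i).[be].
  move=> i; have := Hpos (k'.+1 - i)%N (leq_subr _ _) be (lexx _).
  by rewrite subKn // -ltnS.
pose g := \prod_(i < k'.+1) ('X - (beta (inord i))%:P).
have fg : f = lead_coef f *: (g * ('X - be%:P)).
  rewrite {1}ffac big_ord_recr /=; congr (_ *: (_ * _)).
  apply: eq_bigr => i _; congr ('X - (beta _)%:P); apply: val_inj.
  by rewrite /= inordK // ltnS ltnW.
have f0 : f.[be] = 0 by apply/rootP; exact: hroot ord_max.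
have top := @cd_top R n k' b be hn; rewrite /= -/f f0 polyC0 mulr0 subr0 in top.
set C := Aco R n k'.+1 * hco R n k'.+1 in top.
set q := (gegen R n k'.+1).[be] in top.
have qp : 0 < q by exact: (qpos ord_max).
have Cp : 0 < C by exact: cpos.
have K0 : 0 < C * lead_coef f * q by apply: mulr_gt0 => //; apply: mulr_gt0.
have eq1 : (C * lead_coef f * q) *: g = Ttop b n k'.+1 be.
  have nz : 'X - be%:P != 0 by rewrite polyXsubC_eq0.
  apply: (mulfI nz).
  by rewrite -scal_rearr -fg top.
exists (fun i => (C * lead_coef f * q)^-1 * (wco b n k'.+1 i * (gegen R n i).[be])).
split.
  move=> i; apply: mulr_gt0; first by rewrite invr_gt0.
  apply: mulr_gt0 => //; rewrite /wco; case: ifP => _.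
    by rewrite mulr_gt0 ?hco_gt0.
  exact: hco_gt0.
rewrite -/g -[g](scalerK (lt0r_neq0 K0)) eq1 /Ttop scaler_sumr.
by apply: eq_bigr => i _; rewrite scalerA.
Qed.
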